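(* Let $G$ be a connected graph and $T$ a rooted spanning tree of $G$ whose vertices are identified with their preorder labels. Consider the following marking process. For each cross edge $(u,v)$ with $u\le v$, both endpoints $u$ and $v$ receive a message ''Mark up to $\mathrm{LCA}(u,v)$'' (carrying the pair $(u,v)$). Each vertex $w$ waits until it has received all messages destined for it from its children in $T$ and from its incident cross edges; if the received messages are ''Mark up to $\mathrm{LCA}(u_i,v_i)$'' for $i=1,\dots,k$ (with $k\ge1$), it computes $u_{\min}=\min_i u_i$ and $v_{\max}=\max_i v_i$; if $w$ is an ancestor of both $u_{\min}$ and $v_{\max}$ it sends nothing; otherwise it sends ''Mark up to $\mathrm{LCA}(u_{\min},v_{\max})$'' to its parent and marks the edge joining $w$ to its parent. (A vertex receiving no message sends nothing.) Then this process correctly marks $\mathrm{Chain}(\mathrm{LCA}(u,v),u)$ and $\mathrm{Chain}(\mathrm{LCA}(u,v),v)$ for every cross edge $(u,v)$: the set of marked edges is exactly $\bigcup_{(u,v)} \big(\mathrm{Chain}(\mathrm{LCA}(u,v),u)\cup\mathrm{Chain}(\mathrm{LCA}(u,v),v)\big)$, the union over all cross edges.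
   Context: Cross edges are the edges of $G$ not in $T$. Preorder labeling of $T$: the root receives label $1$; whenever a vertex receives label $\ell$, its children are ordered arbitrarily as $c_1,\dots,c_k$ and child $c_i$ receives label $\ell+1+\sum_{j<i}\#\mathrm{desc}(c_j)$, where $\#\mathrm{desc}(c)$ is the number of descendants of $c$ (including $c$); $\le$, $\min$, $\max$ refer to labels. Every vertex is an ancestor of itself; $\mathrm{LCA}(u,v)$ is the lowest common ancestor in $T$. When $v'$ is an ancestor of $v$, $\mathrm{Chain}(v',v)$ is the set of edges on the tree path from $v'$ to $v$. *)

(* Defs.v *)
From mathcomp Require Import all_boot.
Set Implicit Arguments. Unset Strict Implicit. Unset Printing Implicit Defensive.

(* Vertices are 'I_N, identified with their (0-based) preorder labels.
   The rooted spanning tree T is given by a parent function [par] and a root [r]. *)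
Section Defs.
Variable N : nat.
Variable par : 'I_N -> 'I_N.
Variable r : 'I_N.
Variable E : rel 'I_N.

Definition anc (a x : 'I_N) : bool := fconnect par x a.

Definition is_child (c v : 'I_N) : bool := (c != r) && (par c == v).

Definition desc (c : 'I_N) : {set 'I_N} := [set x | anc c x].

Definition rooted_tree : Prop := par r = r /\ forall x, fconnect par x r.

Definition is_preorder : Prop :=
  val r = 0 /\
  forall v : 'I_N, exists s : seq 'I_N,
    perm_eq s (enum [pred c | is_child c v]) /\
    forall i, i < size s ->
      val (nth v s i) = val v + 1 + sumn [seq #|desc c| | c <- take i s].

Definition simple_graph : Prop := symmetric E /\ irreflexive E.
Definition connected_graph : Prop := forall x y, connect E x y.

Definition spanning : Prop := forall x, x != r -> E x (par x).

Definition cross (u v : 'I_N) : bool := [&& E u v, par u != v & par v != u].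

Definition is_lca (a u v : 'I_N) : bool :=
  [&& anc a u, anc a v & [forall b, anc b u ==> anc b v ==> anc b a]].

Definition lca (u v : 'I_N) : 'I_N := odflt r [pick a | is_lca a u v].

Definition tedge (x : 'I_N) : {set 'I_N} := [set x; par x].

Definition Chain (a v : 'I_N) : {set {set 'I_N}} :=
  [set tedge x | x in [set x | [&& anc a x, anc x v & x != a]]].

(* A message is the pair (u, v) meaning
   "Mark up to LCA(u,v)". *)
Definition received (prev : 'I_N -> option ('I_N * 'I_N)) (w : 'I_N)
  : seq ('I_N * 'I_N) :=
  [seq (if w <= x then (w, x) else (x, w)) | x : 'I_N <- enum [pred x | cross w x]]
  ++ pmap prev (enum [pred c | is_child c w]).

Definition step (prev : 'I_N -> option ('I_N * 'I_N)) (w : 'I_N)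
  : option ('I_N * 'I_N) :=
  match received prev w with
  | [::] => None
  | p0 :: R =>
      let umin := foldr (fun (p : 'I_N * 'I_N) (m : 'I_N) => if p.1 < m then p.1 else m) p0.1 R in
      let vmax := foldr (fun (p : 'I_N * 'I_N) (m : 'I_N) => if m < p.2 then p.2 else m) p0.2 R in
      if anc w umin && anc w vmax then None else Some (umin, vmax)
  end.

(* synchronous rounds; after N rounds every vertex has its final message *)
Definition msg_after (k : nat) : 'I_N -> option ('I_N * 'I_N) :=
  iter k step (fun _ => None).

Definition message (w : 'I_N) : option ('I_N * 'I_N) := msg_after N w.

(* w marks the edge joining it to its parent iff it sends a message *)
Definition marked : {set {set 'I_N}} :=
  [set tedge w | w in [set w | message w]].

Definition cross_chains : {set {set 'I_N}} :=
  \bigcup_(p : 'I_N * 'I_N | cross p.1 p.2 && (p.1 <= p.2))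
     (Chain (lca p.1 p.2) p.1 :|: Chain (lca p.1 p.2) p.2).

End Defs.

(* Main.v *)
Require Import Defs.
From mathcomp Require Import all_boot zify.
Set Implicit Arguments. Unset Strict Implicit. Unset Printing Implicit Defensive.

Section Tree.
Variable N : nat.
Variable par : 'I_N -> 'I_N.
Variable r : 'I_N.
Hypothesis Hroot : par r = r.
Hypothesis Hreach : forall x, fconnect par x r.

Lemma ancP a x : reflect (exists n, iter n par x = a) (anc par a x).
Proof.
apply: (iffP idP) => [H|[n <-]]; last exact: fconnect_iter.
by exists (findex par x a); apply: iter_findex.
Qed.

Lemma anc_refl x : anc par x x.
Proof. exact: connect0. Qed.

Lemma anc_trans a b x : anc par a b -> anc par b x -> anc par a x.
Proof. by rewrite /anc => H1 H2; apply: connect_trans H2 H1. Qed.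

Lemma anc_par c : anc par (par c) c.
Proof. exact: fconnect1. Qed.

Lemma iter_root n : iter n par r = r.
Proof. by elim: n => //= n ->. Qed.

Lemma cyc x m : 0 < m -> iter m par x = x -> x = r.
Proof.
move=> m0 Hx.
have Hk : forall k, iter (m * k) par x = x.
  elim=> [|k IH]; first by rewrite muln0.
  by rewrite mulnS iterD IH Hx.
have [kk Hkk] : exists kk, iter kk par x = r by apply/ancP; apply: Hreach.
have E : m * kk = (m * kk - kk) + kk by rewrite subnK // leq_pmull.
by rewrite -(Hk kk) E iterD Hkk iter_root.
Qed.

Lemma anc_anti a b : anc par a b -> anc par b a -> a = b.
Proof.
move=> /ancP [n Hn] /ancP [m Hm].
case: n Hn => [|n] Hn; first by rewrite -Hn.
have Hb : iter (m + n.+1) par b = b by rewrite iterD Hn Hm.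
have Hbr : b = r by apply: (@cyc b (m + n.+1)) => //; rewrite addnS.
by rewrite -Hn Hbr iter_root.
Qed.

Lemma anc_total a b x : anc par a x -> anc par b x -> anc par a b || anc par b a.
Proof.
move=> /ancP [n <-] /ancP [m <-].
case: (leqP n m) => H.
  apply/orP; right; apply/ancP; exists (m - n); by rewrite -iterD subnK.
apply/orP; left; apply/ancP; exists (n - m); by rewrite -iterD subnK // ltnW.
Qed.

Lemma child_decomp y u : anc par y u -> u != y ->
  exists c, is_child par r c y && anc par c u.
Proof.
move=> Hyu Huy.
have ex : exists n, iter n par u == y by case/ancP: Hyu => n <-; exists n.
case: (ex_minnP ex) => n0 Hn0 Hmin.
case: n0 Hn0 Hmin => [|n] Hn Hmin; first by move: Hn; rewrite /= (negbTE Huy).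
exists (iter n par u); apply/andP; split; last exact: fconnect_iter.
rewrite /is_child Hn andbT; apply/negP => /eqP Hc.
have : iter n par u == y by rewrite -(eqP Hn) /= Hc Hroot.
by move/Hmin; rewrite ltnn.
Qed.

Lemma child_anc c y : is_child par r c y -> anc par y c.
Proof. by case/andP => _ /eqP <-; apply: anc_par. Qed.

Lemma child_not_anc c y : is_child par r c y -> ~~ anc par c y.
Proof.
move=> Hc; apply/negP => H.
have E := anc_anti H (child_anc Hc).
case/andP: Hc => Hcr /eqP Hp.
have : iter 1 par c = c by rewrite /= Hp E.
move/(@cyc c 1 (ltn0Sn 0)) => Hr; by rewrite Hr eqxx in Hcr.
Qed.

Lemma lca_ex u v : exists a, is_lca par a u v.
Proof.
have ex : exists n, anc par (iter n par u) v.
  case/ancP: (Hreach u) => n Hn; exists n; rewrite Hn; exact: Hreach.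
case: (ex_minnP ex) => n0 Hn0 Hmin.
exists (iter n0 par u); apply/and3P; split => //; first exact: fconnect_iter.
apply/forallP => b; apply/implyP => /ancP [m Hm]; apply/implyP => Hbv.
have Hle : n0 <= m by apply: Hmin; rewrite Hm.
apply/ancP; exists (m - n0); by rewrite -iterD subnK.
Qed.

Lemma lcaP u v : is_lca par (lca par r u v) u v.
Proof.
rewrite /lca; case: pickP => [a //|H].
by case: (lca_ex u v) => a Ha; move: (H a); rewrite Ha.
Qed.

Lemma is_lca_sym a u v : is_lca par a u v -> is_lca par a v u.
Proof.
case/and3P => H1 H2 /forallP H3; apply/and3P; split => //.
apply/forallP => b; apply/implyP => Hb1; apply/implyP => Hb2.
by move: (H3 b); rewrite Hb1 Hb2.
Qed.

Lemma chain_key a u v x : is_lca par a u v ->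
  [&& anc par a x, anc par x u & x != a] = anc par x u && ~~ anc par x v.
Proof.
case/and3P => Hau Hav /forallP H3.
apply/idP/idP.
  case/and3P => Hax Hxu Hxa; rewrite Hxu /=; apply/negP => Hxv.
  move: (H3 x); rewrite Hxu Hxv /= => Hxa'.
  by rewrite (anc_anti Hxa' Hax) eqxx in Hxa.
case/andP => Hxu Hxv.
case/orP: (anc_total Hxu Hau) => H.
  by rewrite (anc_trans H Hav) in Hxv.
rewrite H Hxu /=; apply/negP => /eqP E; by rewrite E Hav in Hxv.
Qed.


Hypothesis Hpre : is_preorder par r.

Lemma card_bound (A : {set 'I_N}) (w : 'I_N) :
  (forall x, x \in A -> w <= x) -> w + #|A| <= N.
Proof.
move=> H.
have : size (map val (enum A)) <= size (iota w (N - w)).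
  apply: uniq_leq_size; first by rewrite map_inj_uniq ?enum_uniq //; apply: val_inj.
  move=> y /mapP [x]; rewrite mem_enum => /H Hx ->.
  rewrite mem_iota /=; have := ltn_ord x; have := ltn_ord w; lia.
rewrite size_map -cardE size_iota; by rewrite leq_subRL // ltnW.
Qed.

Lemma anc_in_desc a x : (x \in desc par a) = anc par a x.
Proof. by rewrite inE. Qed.

Lemma interval w x : anc par w x = (w <= x < w + #|desc par w|).
Proof.
suff H : forall k w, #|desc par w| <= k ->
    forall x, anc par w x = (w <= x < w + #|desc par w|) by apply: H.
clear x.
elim=> [|k IH] {}w Hk.
  have : 0 < #|desc par w| by apply/card_gt0P; exists w; rewrite inE anc_refl.
  move: Hk; lia.
case: Hpre => _ /(_ w) [s [Hperm Hlab]].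
have Hs : forall c, (c \in s) = is_child par r c w.
  by move=> c; rewrite (perm_mem Hperm) mem_enum.
have IHc : forall c, c \in s -> forall x, anc par c x = (c <= x < c + #|desc par c|).
  move=> c; rewrite Hs => Hc; apply: IH.
  have : #|desc par c| < #|desc par w|.
    apply: proper_card; rewrite properE; apply/andP; split.
      apply/subsetP => y; rewrite !inE; apply: anc_trans; exact: child_anc.
    apply/subsetPn; exists w; first by rewrite inE anc_refl.
    by rewrite inE child_not_anc.
  move: Hk; lia.
set d := fun c => #|desc par c|.
have Hpref : forall i, i <= size s ->
   (forall x, has (fun c => anc par c x) (take i s) =
              (w < x < w + 1 + sumn [seq d c | c <- take i s])) /\
   #|[set x | has (fun c => anc par c x) (take i s)]| = sumn [seq d c | c <- take i s].
  elim=> [|i IHi] Hi.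
    rewrite take0 /=; split; first by move=> x; lia.
    apply/eqP; rewrite cards_eq0; apply/eqP/setP => x; by rewrite !inE.
  have Hi' : i < size s by [].
  case: (IHi (ltnW Hi)) => Hm Hcard.
  rewrite (take_nth w Hi') map_rcons sumn_rcons.
  have Hc : nth w s i \in s by apply: mem_nth.
  have Hl : nth w s i = w + 1 + sumn [seq d c | c <- take i s] :> nat by exact: Hlab i Hi'.
  split.
    move=> x; rewrite has_rcons Hm (IHc _ Hc x) -/(d _) Hl.
    apply/idP/idP; lia.
  have -> : [set x | has (fun c => anc par c x) (rcons (take i s) (nth w s i))] =
            desc par (nth w s i) :|: [set x | has (fun c => anc par c x) (take i s)].
    by apply/setP => x; rewrite !inE has_rcons.
  rewrite cardsU Hcard.
  have -> : desc par (nth w s i) :&: [set x | has (fun c => anc par c x) (take i s)] = set0.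
    apply/setP => x; rewrite !inE Hm (IHc _ Hc x) -/(d _) Hl; apply/negbTE/negP => /and3P [/andP [? ?] ? ?]; lia.
  rewrite cards0 subn0 addnC.
  done.
case: (Hpref (size s) (leqnn _)); rewrite take_size => Hm Hcard.
have Hw : forall x, anc par w x = (x == w) || has (fun c => anc par c x) s.
  move=> y; apply/idP/idP.
    move=> Hy; case: (eqVneq y w) => // Hyw /=.
    case: (child_decomp Hy Hyw) => c /andP [Hc Hcy].
    by apply/hasP; exists c; rewrite ?Hs.
  case/orP => [/eqP -> | /hasP [c Hc Hcy]]; first exact: anc_refl.
  by apply: anc_trans Hcy; apply: child_anc; rewrite -Hs.
have Hcw : #|desc par w| = (sumn [seq d c | c <- s]).+1.
  have -> : desc par w = w |: [set x | has (fun c => anc par c x) s].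
    by apply/setP => y; rewrite !inE Hw.
  by rewrite cardsU1 Hcard inE Hm ltnn.
move=> y; rewrite Hw Hm Hcw -val_eqE /=.
apply/idP/idP; lia.
Qed.


Definition endp (w : 'I_N) := w + #|desc par w|.

Lemma desc_pos (w : 'I_N) : 0 < #|desc par w|.
Proof. by apply/card_gt0P; exists w; rewrite inE anc_refl. Qed.

Lemma lt_endp (w : 'I_N) : w < endp w.
Proof. by rewrite /endp -addn1 leq_add2l desc_pos. Qed.

Lemma ancI (w x : 'I_N) : anc par w x = (w <= x < endp w).
Proof. exact: interval. Qed.

Lemma end_bound (w : 'I_N) : endp w <= N.
Proof. by apply: card_bound => x; rewrite inE interval => /andP []. Qed.

Lemma anc_le (y c : 'I_N) : anc par y c -> y <= c.
Proof. by rewrite ancI => /andP []. Qed.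

Lemma end_mono (y c : 'I_N) : anc par y c -> endp c <= endp y.
Proof.
move=> Hyc.
have Hc := lt_endp c; have Hb := end_bound c.
have Hz : (endp c).-1 < N by move: Hc Hb; lia.
have Hcz : anc par c (Ordinal Hz) by rewrite ancI /=; move: Hc; lia.
have := anc_trans Hyc Hcz; rewrite ancI /= => /andP [_]; move: Hc; lia.
Qed.

Lemma child_card (c w : 'I_N) : is_child par r c w -> #|desc par c| < #|desc par w|.
Proof.
move=> Hc; apply: proper_card; rewrite properE; apply/andP; split.
  apply/subsetP => y; rewrite !inE; apply: anc_trans; exact: child_anc.
apply/subsetPn; exists w; first by rewrite inE anc_refl.
by rewrite inE child_not_anc.
Qed.

Variable E : rel 'I_N.
Hypothesis Hsym : symmetric E.

Lemma cross_sym (u v : 'I_N) : cross par E u v = cross par E v u.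
Proof. by rewrite /cross Hsym; case: (E v u) => //=; rewrite andbC. Qed.

Definition Inv (w : 'I_N) (m : option ('I_N * 'I_N)) :=
  (m = None <-> forall u v, cross par E u v -> anc par w u -> anc par w v) /\
  forall a b, m = Some (a, b) ->
    [/\ a < endp w, w <= b &
        forall lo hi, lo <= w -> endp w <= hi ->
          ((lo <= a) && (b < hi) <->
           forall u v, cross par E u v -> anc par w u -> lo <= v < hi)].

Definition f1 (p : 'I_N * 'I_N) (m : 'I_N) := if p.1 < m then p.1 else m.
Definition f2 (p : 'I_N * 'I_N) (m : 'I_N) := if m < p.2 then p.2 else m.

Lemma L1 lo (x : 'I_N) R :
  (lo <= foldr f1 x R) = (lo <= x) && all (fun p : 'I_N * 'I_N => lo <= p.1) R.
Proof.
elim: R => [|p R IH] /=; first by rewrite andbT.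
have Hm : forall m : 'I_N, (lo <= f1 p m) = (lo <= p.1) && (lo <= m).
  by move=> m; rewrite /f1; case: ifP => H; apply/idP/idP; lia.
by rewrite Hm IH andbCA.
Qed.

Lemma L2 (x : 'I_N) R : foldr f1 x R <= x.
Proof.
elim: R => [|p R IH] //=.
rewrite /f1 -/f1; case: ifP => H; lia.
Qed.

Lemma L3 hi (x : 'I_N) R :
  (foldr f2 x R < hi) = (x < hi) && all (fun p : 'I_N * 'I_N => p.2 < hi) R.
Proof.
elim: R => [|p R IH] /=; first by rewrite andbT.
have Hm : forall m : 'I_N, (f2 p m < hi) = (p.2 < hi) && (m < hi).
  by move=> m; rewrite /f2; case: ifP => H; apply/idP/idP; lia.
by rewrite Hm IH andbCA.
Qed.

Lemma L4 (x : 'I_N) R : x <= foldr f2 x R.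
Proof.
elim: R => [|p R IH] //=.
rewrite /f2 -/f2; case: ifP => H; lia.
Qed.


Lemma allAnd (a b : pred ('I_N * 'I_N)) s :
  all (fun p => a p && b p) s = all a s && all b s.
Proof. by elim: s => //= p s ->; rewrite andbACA. Qed.

Lemma allLH lo hi (s : seq ('I_N * 'I_N)) (p0 : 'I_N * 'I_N) :
  ((lo <= p0.1) && all (fun p : 'I_N * 'I_N => lo <= p.1) s) &&
  ((p0.2 < hi) && all (fun p : 'I_N * 'I_N => p.2 < hi) s) =
  all (fun p : 'I_N * 'I_N => (lo <= p.1) && (p.2 < hi)) (p0 :: s).
Proof. by rewrite /= (allAnd (fun p => lo <= p.1) (fun p => p.2 < hi)) andbACA. Qed.

Lemma memR prev y p : p \in received par r E prev y <->
  (exists2 x, cross par E y x & p = (if y <= x then (y, x) else (x, y))) \/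
  (exists2 c, is_child par r c y & prev c = Some p).
Proof.
rewrite /received mem_cat; split.
  case/orP => [/mapP [x Hx ->] | ]; first by left; exists x; rewrite // mem_enum in Hx.
  by rewrite mem_pmap => /mapP [c Hc Hpc]; right; exists c; rewrite // mem_enum in Hc.
case => [[x Hx ->] | [c Hc Hpc]]; apply/orP.
  by left; apply/mapP; exists x; rewrite ?mem_enum.
by right; rewrite mem_pmap; apply/mapP; exists c; rewrite ?mem_enum.
Qed.

Lemma step_inv prev y : (forall c, is_child par r c y -> Inv c (prev c)) ->
  Inv y (step par r E prev y).
Proof.
move=> Hch.
have C1 : forall p, p \in received par r E prev y -> p.1 < endp y /\ y <= p.2.
  move=> [a b] /memR [[x Hx E1] | [c Hc Hpc]].
    have := lt_endp y; move: E1; case: ifP => H [-> ->] /= H'; lia.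
  case: (Hch c Hc) => _ /(_ a b Hpc) [Ha Hb _].
  have Hyc := child_anc Hc; have := end_mono Hyc; have := anc_le Hyc => /= H1 H2.
  split; lia.
have C2 : forall lo hi, lo <= y -> endp y <= hi ->
    (all (fun p : 'I_N * 'I_N => (lo <= p.1) && (p.2 < hi)) (received par r E prev y) <->
     forall u v, cross par E u v -> anc par y u -> lo <= v < hi).
  move=> lo hi Hlo Hhi; split.
    move/allP => Hall u v Huv Hyu.
    case: (eqVneq u y) => [Huy | Huy].
      subst u.
      have Hin : (if y <= v then (y, v) else (v, y)) \in received par r E prev y.
        by apply/memR; left; exists v.
      move: (Hall _ Hin); have := lt_endp y; case: ifP => /= H H' H''; lia.
    case: (child_decomp Hyu Huy) => c /andP [Hc Hcu].
    have Hyc := child_anc Hc.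
    have Hle1 := end_mono Hyc; have Hle2 := anc_le Hyc.
    case Hpc: (prev c) => [[a b]|].
      have Hin : (a, b) \in received par r E prev y by apply/memR; right; exists c.
      case: (Hch c Hc) => _ /(_ a b Hpc) [_ _ H].
      have /= Hab := Hall _ Hin.
      apply: (proj1 (H lo hi _ _)) => //; lia.
    case: (Hch c Hc) => [[/(_ Hpc) H _] _].
    have := anc_trans Hyc (H u v Huv Hcu); rewrite ancI; lia.
  move=> H; apply/allP => [[a b]] /memR [[x Hx E1]|[c Hc Hpc]].
    have := H y x Hx (anc_refl y); have := lt_endp y; move: E1.
    case: ifP => _ [-> ->] /= H1 H2; lia.
  case: (Hch c Hc) => _ /(_ a b Hpc) [_ _ Hc2].
  have Hyc := child_anc Hc.
  have Hle1 := end_mono Hyc; have Hle2 := anc_le Hyc.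
  apply/(proj2 (Hc2 lo hi _ _)); try lia.
  move=> u v Huv Hcu; exact: H u v Huv (anc_trans Hyc Hcu).
case HR: (received par r E prev y) => [|p0 R'].
  have Eq : step par r E prev y = None by rewrite /step HR.
  rewrite Eq; split; last by [].
  split => // _ u v Huv Hyu.
  have := proj1 (C2 y (endp y) (leqnn _) (leqnn _)); rewrite HR /= => /(_ isT) H.
  rewrite ancI; exact: H u v Huv Hyu.
set umin := foldr f1 p0.1 R'.
set vmax := foldr f2 p0.2 R'.
have Eq : step par r E prev y =
   (if anc par y umin && anc par y vmax then None else Some (umin, vmax)).
  by rewrite /step HR.
have Hp0 : p0 \in received par r E prev y by rewrite HR mem_head.
have [Hc1 Hc2] := C1 p0 Hp0.
have H1 : umin < endp y := leq_ltn_trans (L2 _ _) Hc1.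
have H2 : y <= vmax := leq_trans Hc2 (L4 _ _).
have Hgen : forall lo hi, (lo <= umin) && (vmax < hi) =
   all (fun p : 'I_N * 'I_N => (lo <= p.1) && (p.2 < hi)) (received par r E prev y).
  by move=> lo hi; rewrite HR L1 L3 allLH.
have Hcond : anc par y umin && anc par y vmax = (y <= umin) && (vmax < endp y).
  by rewrite !ancI H1 H2 andbT.
rewrite Eq; split.
  split.
    case: ifP => // Hc _ u v Huv Hyu.
    move: Hc; rewrite Hcond Hgen => /(proj1 (C2 _ _ (leqnn _) (leqnn _))) H.
    rewrite ancI; exact: H _ _ Huv Hyu.
  move=> H.
  have -> : anc par y umin && anc par y vmax.
    rewrite Hcond Hgen; apply/(proj2 (C2 _ _ (leqnn _) (leqnn _))) => u v Huv Hyu.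
    rewrite -ancI; exact: (H u v Huv Hyu).
  by [].
move=> a b; case: ifP => // Hc [<- <-]; split => // lo hi Hlo Hhi.
by rewrite Hgen; apply: C2.
Qed.

Lemma msg_inv k w : #|desc par w| <= k -> Inv w (msg_after par r E k w).
Proof.
elim: k w => [|k IH] w Hk.
  by have := desc_pos w; move: Hk; lia.
rewrite /msg_after iterS -/(msg_after par r E k).
apply: step_inv => c Hc; apply: IH.
have := child_card Hc; move: Hk; lia.
Qed.

Lemma message_inv w : Inv w (message par r E w).
Proof.
apply: msg_inv.
by have := max_card (mem (desc par w)); rewrite card_ord.
Qed.

End Tree.

Theorem theorem6p2 (N : nat) (E : rel 'I_N) (par : 'I_N -> 'I_N) (r : 'I_N) :
  simple_graph E -> connected_graph E ->
  rooted_tree par r -> spanning par r E -> is_preorder par r ->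
  marked par r E = cross_chains par r E.
Proof.
move=> [Hsym _] _ [Hroot Hreach] _ Hpre.
have Hinv : forall w, Inv par E w (message par r E w) by move=> w; apply: message_inv.
have CK : forall a u v x, is_lca par a u v ->
    [&& anc par a x, anc par x u & x != a] = anc par x u && ~~ anc par x v.
  by move=> a u v x Hl; exact: (chain_key Hroot Hreach x Hl).
have LP : forall u v, is_lca par (lca par r u v) u v by move=> u v; apply: lcaP.
apply/setP => e; rewrite /marked /cross_chains.
apply/imsetP/bigcupP.
  case=> w; rewrite inE => Hw ->.
  case: (boolP [exists u, exists v, [&& cross par E u v, anc par w u & ~~ anc par w v]]).
    move=> /existsP [u /existsP [v /and3P [Huv Hwu Hwv]]].
    case: (leqP u v) => Hle.
      exists (u, v); first by rewrite /= Huv Hle.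
      rewrite in_setU; apply/orP; left; apply/imsetP; exists w => //.
      by rewrite inE (CK _ u v) ?Hwu ?Hwv.
    exists (v, u); first by rewrite /= -cross_sym // Huv ltnW.
    rewrite in_setU; apply/orP; right; apply/imsetP; exists w => //.
    by rewrite inE (CK _ u v) ?Hwu ?Hwv // is_lca_sym.
  move=> Hne; exfalso.
  case: (Hinv w) => [[_ H] _].
  move: Hw; rewrite H //.
  move=> u v Huv Hwu; move: Hne; rewrite negb_exists => /forallP /(_ u).
  rewrite negb_exists => /forallP /(_ v).
  by rewrite Huv Hwu /= negbK.
case=> [[u v]] /= /andP [Huv _].
rewrite in_setU => /orP [] /imsetP [x Hx ->].
  exists x; last by [].
  move: Hx; rewrite inE (CK _ u v x (LP u v)) => /andP [Hxu Hxv].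
  case: (Hinv x) => [[H _] _]; case Hm: (message par r E x) => [p|]; first by rewrite inE Hm.
  by move: (H Hm u v Huv Hxu); rewrite (negbTE Hxv).
exists x; last by [].
move: Hx; rewrite inE (CK _ v u x (is_lca_sym (LP u v))) => /andP [Hxv Hxu].
case: (Hinv x) => [[H _] _]; case Hm: (message par r E x) => [p|]; first by rewrite inE Hm.
move: (H Hm v u); rewrite (cross_sym par Hsym v u) Huv Hxv (negbTE Hxu) => /(_ isT isT) F.
by exfalso; move: F.
Qed.
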